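(* Let $G$ be a finite simple connected graph and let $S,S'\subseteq V(G)$ with $2\le |S|$ and $S\subset S'$. If $G$ contains $k$ completely independent $S'$-Steiner trees, then $G$ contains $k$ completely independent $S$-Steiner trees. In particular $\kappa^*_G(S)\geq \kappa^*_G(S')$.
   Context: For $S\subseteq V(G)$ with $|S|\ge 2$, an $S$-Steiner tree of $G$ is a subtree $T$ of $G$ with $S\subseteq V(T)$ all of whose leaves belong to $S$. A family of $S$-Steiner trees $T_1,\dots,T_k$ is completely independent if for all $1\le p<q\le k$: $E(T_p)\cap E(T_q)=\emptyset$, $V(T_p)\cap V(T_q)=S$, and for any two vertices $x_1,x_2\in S$ the $(x_1,x_2)$-paths in $T_p$ and in $T_q$ are internally disjoint. $\kappa^*_G(S)$ is the maximum number of $S$-Steiner trees in a completely independent family in $G$. *)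

(* Defs.v *)
From mathcomp Require Import all_boot.
Set Implicit Arguments. Unset Strict Implicit. Unset Printing Implicit Defensive.

Definition simple_graph (V : finType) (adj : rel V) : Prop :=
  symmetric adj /\ irreflexive adj.

Definition graph_connected (V : finType) (adj : rel V) : Prop :=
  forall x y : V, connect adj x y.

(* A subgraph H = (VH, EH); edges are unordered pairs {x,y}. *)
Definition subgraph V : Type := ({set V} * {set {set V}})%type.

Definition is_subgraph (V : finType) (adj : rel V) (H : subgraph V) : Prop :=
  forall eps, eps \in H.2 ->
    exists x y, [/\ eps = [set x; y], adj x y, x \in H.1 & y \in H.1].

Definition hadj (V : finType) (H : subgraph V) : rel V :=
  fun a b => [set a; b] \in H.2.

Definition is_path (V : finType) (H : subgraph V) (x y : V) (p : seq V) : Prop :=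
  [/\ x \in H.1, path (hadj H) x p, uniq (x :: p) & last x p = y].

Definition sub_connected (V : finType) (H : subgraph V) : Prop :=
  forall x y, x \in H.1 -> y \in H.1 -> exists p, is_path H x y p.

Definition has_cycle (V : finType) (H : subgraph V) : Prop :=
  exists c : seq V, [/\ 3 <= size c, uniq c & cycle (hadj H) c].

Definition is_tree (V : finType) (adj : rel V) (H : subgraph V) : Prop :=
  [/\ is_subgraph adj H, sub_connected H & ~ has_cycle H].

Definition degree (V : finType) (H : subgraph V) (v : V) : nat :=
  #|[set eps in H.2 | v \in eps]|.

Definition steiner_tree (V : finType) (adj : rel V) (S : {set V}) (H : subgraph V) : Prop :=
  [/\ is_tree adj H, S \subset H.1 &
      forall v, v \in H.1 -> degree H v = 1 -> v \in S].

(* internal vertices of the path x :: p (drop the first and last vertex) *)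
Definition internal (V : Type) (p : seq V) : seq V := take (size p).-1 p.

Definition completely_independent (V : finType) (adj : rel V) (S : {set V})
  (k : nat) (T : 'I_k -> subgraph V) : Prop :=
  (forall i, steiner_tree adj S (T i)) /\
  (forall p q : 'I_k, p < q ->
     [/\ [disjoint (T p).2 & (T q).2],
         (T p).1 :&: (T q).1 = S &
         forall x1 x2, x1 \in S -> x2 \in S ->
           forall P Q, is_path (T p) x1 x2 P -> is_path (T q) x1 x2 Q ->
             [disjoint internal P & internal Q]]).

Definition has_cist (V : finType) (adj : rel V) (S : {set V}) (k : nat) : Prop :=
  exists T : 'I_k -> subgraph V, completely_independent adj S T.

Definition is_kappa_star (V : finType) (adj : rel V) (S : {set V}) (m : nat) : Prop :=
  has_cist adj S m /\ forall k, has_cist adj S k -> k <= m.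

(* Main.v *)
Require Import Defs.
From mathcomp Require Import all_boot.
From Stdlib Require Import ClassicalDescription.
Set Implicit Arguments. Unset Strict Implicit. Unset Printing Implicit Defensive.

Section Aux.
Variable V : finType.

Lemma uconn (e : rel V) x y : connect e x y ->
  exists p, [/\ path e x p, uniq (x :: p) & last x p = y].
Proof.
case/connectP=> p ep ->. case: (shortenP ep) => p' ep' up' _. by exists p'.
Qed.

Definition avoid (e : rel V) (v : V) : rel V :=
  [rel x y | [&& e x y, x != v & y != v]].

Lemma avoid_sym e v : symmetric e -> symmetric (avoid e v).
Proof. move=> se x y; rewrite /avoid /= se; congr (_ && _); apply: andbC. Qed.

Lemma avoid_sub e v : subrel (avoid e v) e.
Proof. by move=> x y /= /andP[]. Qed.

Lemma path_avoid e v x p : path e x p -> v \notin x :: p -> path (avoid e v) x p.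
Proof.
elim: p x => //= y p IH x /andP[exy ep].
rewrite !in_cons !negb_or => /andP[vx /andP[vy vp]].
rewrite /avoid /= exy eq_sym vx eq_sym vy /=; apply: IH => //.
by rewrite in_cons negb_or vy.
Qed.

Lemma avoid_notin e v x p : path (avoid e v) x p -> v \notin p.
Proof.
elim: p x => //= y p IH x /andP[/and3P[_ _ yv] ep].
by rewrite in_cons negb_or eq_sym yv (IH y).
Qed.

Lemma hadj_sym (H : subgraph V) : symmetric (hadj H).
Proof. by move=> a b; rewrite /hadj setUC. Qed.

Lemma key (H : subgraph V) a v b : ~ has_cycle H -> hadj H a v -> hadj H v b ->
  a != b -> ~~ connect (avoid (hadj H) v) a b.
Proof.
move=> nc hav hvb nab; apply/negP => /uconn [p [pp up lp]].
apply: nc; exists (v :: a :: p).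
have vp := avoid_notin pp.
case: p pp up lp vp => [|c p] pp up lp vp.
  by rewrite /= in lp; rewrite lp eqxx in nab.
have av : a != v by move: pp => /= /andP[/and3P[]].
split.
- by [].
- by rewrite cons_uniq up andbT in_cons negb_or eq_sym av.
- rewrite /= rcons_path hadj_sym hav /=.
  have := sub_path (@avoid_sub _ v) pp; rewrite /= => /andP[-> ->]; rewrite /= in lp; by rewrite lp hadj_sym.
Qed.

Lemma nbr (e : rel V) x p v : path e x p -> uniq (x :: p) -> v \in p ->
  v != last x p ->
  exists a b, [/\ e a v, e v b, a \in x :: p & b \in x :: p] /\
    [/\ a != b, a != v, b != v,
    connect (avoid e v) x a & connect (avoid e v) b (last x p)].
Proof.
move=> ep up vp; case/splitPr: vp ep up => p1 p2.
rewrite last_cat /=.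
case: p2 => [|b p3]; first by rewrite /= eqxx.
move=> ep up _.
have up' : uniq ((x :: p1) ++ v :: b :: p3) by [].
rewrite cat_uniq in up'; case/and3P: up' => u1 hn u2.
move: ep; rewrite -cat_cons cat_path /= => /and4P[e1 eav evb e3].
exists (last x p1), b.
have al := mem_last x p1.
have vn : v \notin x :: p1 by apply: contra hn => h; rewrite /= h.
have bn : b \notin x :: p1 by apply: contra hn => h; rewrite /= h orbT.
move: u2 => /= /andP[]; rewrite in_cons negb_or => /andP[vb vp3] /andP[bp3 _].
split; split => //.
- by rewrite -cat_cons mem_cat al.
- by rewrite -cat_cons mem_cat !in_cons eqxx !orbT.
- by apply: contraNneq bn => <-.
- by apply: contraNneq vn => <-.
- by rewrite eq_sym.
- by apply: (path_connect (path_avoid e1 vn)); exact: al.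
- apply: (path_connect (path_avoid e3 _)); first by rewrite in_cons negb_or vb vp3.
  exact: mem_last.
Qed.

Definition pb (P : Prop) : bool :=
  if excluded_middle_informative P then true else false.
Lemma pbP P : reflect P (pb P).
Proof. by rewrite /pb; case: excluded_middle_informative => h; constructor. Qed.

Definition onSpath (T : subgraph V) (S : {set V}) v :=
  exists x1 x2 p, [/\ x1 \in S, x2 \in S, is_path T x1 x2 p & v \in x1 :: p].
Definition Wset T S := [set v | pb (onSpath T S v)].
Definition prune T S : subgraph V := (Wset T S, [set e in T.2 | e \subset Wset T S]).

Lemma hadj_prune (T : subgraph V) (S : {set V}) a b :
  hadj (prune T S) a b = [&& hadj T a b, a \in Wset T S & b \in Wset T S].
Proof. by rewrite /hadj /= inE subUset !sub1set. Qed.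

Lemma W_on (T : subgraph V) (S : {set V}) x1 x2 p v : x1 \in S -> x2 \in S -> is_path T x1 x2 p ->
  v \in x1 :: p -> v \in Wset T S.
Proof. move=> *; rewrite inE; apply/pbP; by exists x1, x2, p. Qed.

Lemma on_W (T : subgraph V) (S : {set V}) v : v \in Wset T S -> onSpath T S v.
Proof. by rewrite inE => /pbP. Qed.

Lemma subg_mem adj (T : subgraph V) a b : is_subgraph adj T -> hadj T a b ->
  a \in T.1 /\ b \in T.1.
Proof.
move=> sg h; have [x [y [E _ hx hy]]] := sg _ h.
have ha : a \in [set a; b] by rewrite set21.
have hb : b \in [set a; b] by rewrite set22.
rewrite E in ha hb.
by split; [case/set2P: ha => ->|case/set2P: hb => ->].
Qed.

Lemma path_mem adj (T : subgraph V) x p y : is_subgraph adj T ->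
  path (hadj T) x p -> y \in p -> y \in T.1.
Proof.
move=> sg; elim: p x => //= z p IH x /andP[h ep]; rewrite in_cons => /orP[/eqP->|].
  by case: (subg_mem sg h).
by move=> yp; apply: IH ep yp.
Qed.

Lemma W_sub adj (T : subgraph V) (S : {set V}) : is_subgraph adj T -> Wset T S \subset T.1.
Proof.
move=> sg; apply/subsetP => v /on_W [x1 [x2 [p [_ _ [hx pp _ _] vin]]]].
move: vin; rewrite in_cons => /orP[/eqP->//|]; exact: path_mem sg pp.
Qed.

Lemma S_W (T : subgraph V) (S : {set V}) : S \subset T.1 -> S \subset Wset T S.
Proof.
move=> ST; apply/subsetP => x xS; apply: (@W_on _ _ x x [::]) => //.
  by split => //; exact: (subsetP ST).
exact: mem_head.
Qed.

Lemma path_prune (T : subgraph V) (S : {set V}) x p : path (hadj T) x p -> all (mem (Wset T S)) (x :: p) ->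
  path (hadj (prune T S)) x p.
Proof.
move=> pp al; apply: (sub_in_path (P := mem (Wset T S))) al pp.
by move=> a b Pa Pb h; rewrite hadj_prune h Pa Pb.
Qed.

Lemma conn_W (T : subgraph V) (S : {set V}) x1 x2 p v : x1 \in S -> x2 \in S -> is_path T x1 x2 p ->
  v \in x1 :: p -> connect (hadj (prune T S)) x1 v.
Proof.
move=> x1S x2S hp vin; apply: (path_connect (path_prune (p := p) _ _)) => //.
  by case: hp.
by apply/allP => u hu; exact: W_on hp hu.
Qed.

Lemma prune_steiner adj (T : subgraph V) (S : {set V}) : is_tree adj T -> S \subset T.1 ->
  steiner_tree adj S (prune T S).
Proof.
case=> sg sc nc ST.
have SW := S_W ST.
have cs := sym_connect_sym (hadj_sym (prune T S)).
split; [split | exact: SW | ].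
- move=> eps; rewrite inE => /andP[ein esub].
  have [x [y [E axy hx hy]]] := sg _ ein.
  move: esub; rewrite E => esub.
  exists x, y; split => //; apply: (subsetP esub); by rewrite ?set21 ?set22.
- move=> u w uW wW.
  have [x1 [x2 [p [x1S x2S hp uin]]]] := on_W uW.
  have [y1 [y2 [q [y1S y2S hq win]]]] := on_W wW.
  have c1 := conn_W x1S x2S hp uin.
  have c2 := conn_W y1S y2S hq win.
  have [r hr] := sc x1 y1 (subsetP ST x1 x1S) (subsetP ST y1 y1S).
  have c3 : connect (hadj (prune T S)) x1 y1.
    apply: (conn_W x1S y1S hr); case: hr => _ _ _ <-; exact: mem_last.
  have : connect (hadj (prune T S)) u w.
    rewrite cs in c1.
    by apply: connect_trans c1 (connect_trans c3 c2).
  case/uconn => s [ps us ls]; exists s; by split.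
- move=> [c [sz uc cc]]; apply: nc; exists c; split => //.
  by apply: sub_cycle cc => a b; rewrite hadj_prune => /and3P[].
- move=> v vW dv; case: (boolP (v \in S)) => // vS; exfalso.
  have [x1 [x2 [p [x1S x2S hp vin]]]] := on_W vW.
  case: hp => hx pp up lp.
  have vx1 : v != x1 by apply: contraNneq vS => ->.
  have vp : v \in p by move: vin; rewrite in_cons (negbTE vx1).
  have vl : v != last x1 p by rewrite lp; apply: contraNneq vS => ->.
  have [a [b [[hav hvb ain bin] [nab nav nbv _ _]]]] := nbr pp up vp vl.
  have hp : is_path T x1 x2 p by [].
  have aW := W_on x1S x2S hp ain.
  have bW := W_on x1S x2S hp bin.
  have : 2 <= degree (prune T S) v.
    rewrite /degree.
    apply: leq_trans (subset_leq_card (A := [set [set a; v]; [set v; b]]) _).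
      rewrite cards2; case: eqP => // E.
      have : a \in [set v; b] by rewrite -E set21.
      by rewrite !inE (negbTE nav) (negbTE nab).
    apply/subsetP => eps; rewrite !inE => /orP[/eqP->|/eqP->].
      by rewrite (hav : [set a; v] \in T.2) subUset !sub1set aW vW set22.
    by rewrite (hvb : [set v; b] \in T.2) subUset !sub1set bW vW set21.
  by rewrite dv.
Qed.

Lemma W_sep adj (T : subgraph V) (S : {set V}) v : is_tree adj T -> v \in Wset T S -> v \notin S ->
  exists x1 x2, [/\ x1 \in S, x2 \in S & ~~ connect (avoid (hadj T) v) x1 x2].
Proof.
case=> sg sc nc vW vS.
have [x1 [x2 [p [x1S x2S hp vin]]]] := on_W vW.
case: hp => hx pp up lp.
have vx1 : v != x1 by apply: contraNneq vS => ->.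
have vp : v \in p by move: vin; rewrite in_cons (negbTE vx1).
have vl : v != last x1 p by rewrite lp; apply: contraNneq vS => ->.
have [a [b [[hav hvb ain bin] [nab nav nbv ca cb]]]] := nbr pp up vp vl.
exists x1, x2; split => //; apply/negP => c12.
have cs := sym_connect_sym (avoid_sym v (hadj_sym T)).
have := key nc hav hvb nab; apply/negP/negPn.
rewrite cs in ca; rewrite cs lp in cb.
exact: connect_trans ca (connect_trans c12 cb).
Qed.

Lemma sep_internal (T : subgraph V) v z1 z2 P : is_path T z1 z2 P ->
  v != z1 -> v != z2 -> ~~ connect (avoid (hadj T) v) z1 z2 -> v \in internal P.
Proof.
move=> [_ pP uP lP] n1 n2 nc; apply/negPn/negP => ni; apply: (negP nc).
apply/connectP; exists P; last by rewrite lP.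
apply: path_avoid => //; rewrite in_cons negb_or n1 /=.
move: pP uP lP ni; case/lastP: P => [|P' z] //= _ _.
rewrite last_rcons => lp.
rewrite /internal size_rcons /= -cats1 take_size_cat // => ni.
by rewrite cats1 mem_rcons in_cons negb_or ni lp n2.
Qed.

Lemma pick_pair (R1 R2 : rel V) (S : {set V}) x1 x2 y1 y2 :
  symmetric R1 -> transitive R1 -> symmetric R2 -> transitive R2 ->
  x1 \in S -> x2 \in S -> y1 \in S -> y2 \in S -> ~~ R1 x1 x2 -> ~~ R2 y1 y2 ->
  exists z1 z2, [/\ z1 \in S, z2 \in S, ~~ R1 z1 z2 & ~~ R2 z1 z2].
Proof.
move=> s1 t1 s2 t2 x1S x2S y1S y2S n1 n2.
have [z [zS nz]] : exists z, z \in S /\ ~~ R2 x1 z.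
  case: (boolP (R2 x1 y1)) => h1; last by exists y1.
  exists y2; split => //; apply: contra n2 => h2.
  by apply: (t2 x1); [rewrite s2 | ].
case: (boolP (R2 x1 x2)) => h12; last by exists x1, x2.
case: (boolP (R1 x1 z)) => h1z; last by exists x1, z.
exists x2, z; split => //.
- apply: contra n1 => h; apply: (t1 z) => //; by rewrite s1.
- apply: contra nz => h; exact: (t2 x2).
Qed.

Lemma prune_sub (T : subgraph V) (S : {set V}) : (prune T S).2 \subset T.2.
Proof. by apply/subsetP => e; rewrite inE => /andP[]. Qed.

Lemma part1 adj (S S' : {set V}) k : S \subset S' ->
  has_cist adj S' k -> has_cist adj S k.
Proof.
move=> SS' [T [st ind]].
have ST i : S \subset (T i).1 by case: (st i) => _ h _; exact: subset_trans SS' h.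
exists (fun i => prune (T i) S); split.
  by move=> i; case: (st i) => tr _ _; exact: prune_steiner tr (ST i).
move=> p q pq; case: (ind p q pq) => dE iV pth.
case: (st p) => trp _ _; case: (st q) => trq _ _.
have trp' := trp; have trq' := trq.
case: trp' => [sgp scp ncp]; case: trq' => [sgq scq ncq].
split.
- exact: disjointWl (prune_sub _ _) (disjointWr (prune_sub _ _) dE).
- apply/setP => v; rewrite inE; apply/andP/idP.
    case=> vp vq; case: (boolP (v \in S)) => // vS; exfalso.
    have [x1 [x2 [x1S x2S n12]]] := W_sep trp vp vS.
    have [y1 [y2 [y1S y2S m12]]] := W_sep trq vq vS.
    have [z1 [z2 [z1S z2S np nq]]] := pick_pair
      (sym_connect_sym (avoid_sym v (hadj_sym _))) (@connect_trans _ _)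
      (sym_connect_sym (avoid_sym v (hadj_sym _))) (@connect_trans _ _)
      x1S x2S y1S y2S n12 m12.
    have [P hP] := scp z1 z2 (subsetP (ST p) z1 z1S) (subsetP (ST p) z2 z2S).
    have [Q hQ] := scq z1 z2 (subsetP (ST q) z1 z1S) (subsetP (ST q) z2 z2S).
    have vz1 : v != z1 by apply: contraNneq vS => ->.
    have vz2 : v != z2 by apply: contraNneq vS => ->.
    have D := pth z1 z2 (subsetP SS' _ z1S) (subsetP SS' _ z2S) P Q hP hQ.
    have iP := sep_internal hP vz1 vz2 np.
    have iQ := sep_internal hQ vz1 vz2 nq.
    by rewrite (disjointFl D iQ) in iP.
  by move=> vS; rewrite !(subsetP (S_W (ST _))).
- move=> x1 x2 x1S x2S P Q hP hQ.
  apply: (pth x1 x2 (subsetP SS' _ x1S) (subsetP SS' _ x2S)).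
  + case: hP => hx pP uP lP; split => //.
      exact: (subsetP (W_sub S sgp)).
    by apply: sub_path pP => a b; rewrite hadj_prune => /and3P[].
  + case: hQ => hx pQ uQ lQ; split => //.
      exact: (subsetP (W_sub S sgq)).
    by apply: sub_path pQ => a b; rewrite hadj_prune => /and3P[].
Qed.

End Aux.

Theorem theorem2p2 (V : finType) (adj : rel V) (S S' : {set V}) :
  simple_graph adj -> graph_connected adj ->
  2 <= #|S| -> S \proper S' ->
  (forall k : nat, has_cist adj S' k -> has_cist adj S k) /\
  (forall m m' : nat, is_kappa_star adj S m -> is_kappa_star adj S' m' -> m' <= m).
Proof.
move=> _ _ _ /proper_sub SS'; split.
  by move=> k; exact: part1.
move=> m m' [hm maxm] [hm' _]; apply: maxm; exact: part1 hm'.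
Qed.
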